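(* Let $X$ and $Y$ be $n\times n$ Hermitian matrices whose Thompson metric $d=d_T(X,Y)$ is finite, and let $1\le p\le\infty$. Then $$\|X-Y\|_p\;\le\;2^{\frac1p}\,\frac{e^d-1}{e^d}\,\max\big[\|X\|_p,\|Y\|_p\big].$$
   Context: For Hermitian matrices $A,B$, write $A\le B$ (Löwner order) if $B-A$ is positive semidefinite. The Thompson metric of Hermitian matrices $X,Y$ is $d_T(X,Y)=\inf\{\log\alpha:\ \alpha\ge 1,\ X\le\alpha Y,\ Y\le \alpha X\}$, with $d_T(X,Y)=+\infty$ if no such $\alpha$ exists. For positive semidefinite $X,Y$ this is the usual $\log\max\{M(X/Y),M(Y/X)\}$, where $M(X/Y)=\inf\{\lambda>0: X\le\lambda Y\}$. For a Hermitian matrix $M$ with eigenvalues $\mu_1\ge\dots\ge\mu_n$, the Schatten $p$-norm is $\|M\|_p=(\sum_{i=1}^n|\mu_i|^p)^{1/p}$ for $1\le p<\infty$. For $p=\infty$ it is $\max_i|\mu_i|$ (the spectral norm), and $2^{1/\infty}=1$. *)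

(* Defs.v *)
From HB Require Import structures.
From mathcomp Require Import all_boot all_order all_algebra.
From mathcomp Require Import complex.
From mathcomp Require Import classical_sets boolp reals constructive_ereal ereal.
From mathcomp Require Import sequences exp.
Set Implicit Arguments. Unset Strict Implicit. Unset Printing Implicit Defensive.
Import Order.TTheory GRing.Theory Num.Theory.
Local Open Scope ring_scope.

Section Defs.
Variable R : realType.
Local Notation C := (complex R).

Definition adjmx m n (M : 'M[C]_(m, n)) : 'M[C]_(n, m) := (map_mx Num.conj M)^T.

(* Positive semidefinite: v A v^* >= 0 (i.e. real and nonnegative) for all v. *)
Definition psdmx n (A : 'M[C]_n) : Prop :=
  forall v : 'rV[C]_n, 0 <= (v *m A *m adjmx v) 0 0.

Definition loewner n (A B : 'M[C]_n) : Prop := psdmx (B - A).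

Definition thompson_set n (X Y : 'M[C]_n) : set R :=
  [set a | 1 <= a /\ loewner X ((a%:C)%C *: Y) /\ loewner Y ((a%:C)%C *: X)].

(* d_T(X,Y) = inf { log alpha : alpha in thompson_set }, = +oo if empty. *)
Definition thompson n (X Y : 'M[C]_n) : \bar R :=
  ereal_inf [set (ln a)%:E | a in thompson_set X Y]%classic.

(* Eigenvalues (with multiplicity) of a Hermitian (hence normal) matrix:
   the diagonal of its spectral decomposition A = P^-1 diag(mu) P. *)
Definition eigvals n (A : 'M[C]_n) : 'rV[C]_n := spectral_diag A.

(* Modulus |z| of a complex number, as an element of R (|z| is real). *)
Definition cabs (z : C) : R := complex.Re `|z|.

(* Schatten p-norm, 1 <= p <= +oo (value at other p irrelevant). *)
Definition schatten (p : \bar R) n (M : 'M[C]_n) : R :=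
  match p with
  | r%:E => powR (\sum_(i < n) powR (cabs (eigvals M 0 i)) r) r^-1
  | +oo%E => \big[Num.max/0]_(i < n) cabs (eigvals M 0 i)
  | -oo%E => 0
  end.

Definition two_pow_inv (p : \bar R) : R :=
  match p with
  | r%:E => powR 2 r^-1
  | _ => 1
  end.

End Defs.

(* Main.v *)
From HB Require Import structures.
From mathcomp Require Import all_boot all_order all_algebra.
From mathcomp Require Import complex spectral sesquilinear.
From mathcomp Require Import classical_sets boolp reals constructive_ereal ereal.
From mathcomp Require Import sequences exp.
From mathcomp Require Import interval_inference convex hoelder.
From mathcomp Require Import ring lra.
Require Import Defs.
Set Implicit Arguments. Unset Strict Implicit. Unset Printing Implicit Defensive.
Import Order.TTheory GRing.Theory Num.Theory.
Local Open Scope ring_scope.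
Section Real.
Variable R : realType.

Lemma conv2_powR (r t x y : R) : 1 <= r -> 0 <= t -> t <= 1 -> 0 <= x -> 0 <= y ->
  powR (t * x + (1 - t) * y) r <= t * powR x r + (1 - t) * powR y r.
Proof.
move=> r1 t0 t1 x0 y0.
have := @convex_powR R r r1 (Itv01 (eqbRL t0 _) (eqbRL t1 _)) x y.
move/(_ isT isT) => H.
have := H _ _; rewrite !convRE /=; apply.
  by rewrite inE /= in_itv /= x0.
by rewrite inE /= in_itv /= y0.
Qed.

Lemma jensen_gen (r : R) n (m a : 'I_n -> R) : 1 <= r ->
  (forall j, 0 <= m j) -> (forall j, 0 <= a j) ->
  powR ((\sum_j m j * a j) / (\sum_j m j)) r * (\sum_j m j)
   <= \sum_j m j * powR (a j) r.
Proof.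
move=> r1; elim: n m a => [|n IH] m a m0 a0.
  by rewrite !big_ord0 mulr0.
rewrite !big_ord_recr /=.
set s := \sum_(i < n) m (widen_ord (leqnSn n) i).
set A := \sum_(i < n) m (widen_ord (leqnSn n) i) * a (widen_ord (leqnSn n) i).
set B := \sum_(i < n) m (widen_ord (leqnSn n) i) * powR (a (widen_ord (leqnSn n) i)) r.
set mn := m ord_max; set an := a ord_max.
have IHn := IH (fun i => m (widen_ord (leqnSn n) i)) (fun i => a (widen_ord (leqnSn n) i))
  (fun i => m0 _) (fun i => a0 _).
rewrite -/s -/A -/B in IHn.
have s0 : 0 <= s by apply: sumr_ge0 => i _.
have B0 : 0 <= B by apply: sumr_ge0 => i _; rewrite mulr_ge0 ?powR_ge0.
have A0 : 0 <= A by apply: sumr_ge0 => i _; rewrite mulr_ge0.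
have mn0 : 0 <= mn := m0 _.
have an0 : 0 <= an := a0 _.
have [->|s'0] := eqVneq (s + mn) 0.
  by rewrite mulr0 addr_ge0 // mulr_ge0 // powR_ge0.
have s'p : 0 < s + mn by rewrite lt_def s'0 addr_ge0.
have [s00|sn0] := eqVneq s 0.
  have A00 : A = 0.
    rewrite /A big1 // => i _.
    have /psumr_eq0P := s00; move=> /(_ (fun i _ => m0 _) i isT) ->.
    by rewrite mul0r.
  rewrite A00 s00 !add0r in s'p s'0 *.
  rewrite mulrAC divff // mul1r mulrC.
  by rewrite -[X in X <= _]add0r lerD2r.
have sp : 0 < s by rewrite lt_def sn0 s0.
set t := s / (s + mn).
have t0 : 0 <= t by rewrite /t divr_ge0 // ltW.
have t1 : t <= 1 by rewrite ler_pdivrMr // mul1r lerDl.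
have e1 : (A + mn * an) / (s + mn) = t * (A / s) + (1 - t) * an.
  rewrite /t; field.
  by apply/andP; split.
have e2 : 1 - t = mn / (s + mn) by rewrite /t; field.
rewrite e1.
apply: le_trans; first exact: (ler_wpM2r (ltW s'p) (conv2_powR r1 t0 t1 (divr_ge0 A0 s0) an0)).
rewrite mulrDl e2 /t -!mulrA ![_ * (s + mn)]mulrC !mulrA !mulfVK //.
by rewrite lerD2r mulrC.
Qed.

Lemma jensen (r : R) n (m a : 'I_n -> R) : 1 <= r ->
  (forall j, 0 <= m j) -> (forall j, 0 <= a j) -> \sum_j m j = 1 ->
  powR (\sum_j m j * a j) r <= \sum_j m j * powR (a j) r.
Proof.
move=> r1 m0 a0 s1; have := jensen_gen r1 m0 a0.
by rewrite s1 divr1 mulr1.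
Qed.
Lemma sum_pow_bound (r : R) n (lam a b : 'I_n -> R) (m m' : 'I_n -> 'I_n -> R) :
  1 <= r -> (forall j, 0 <= a j) -> (forall j, 0 <= b j) ->
  (forall i j, 0 <= m i j) -> (forall i j, 0 <= m' i j) ->
  (forall i, \sum_j m i j = 1) -> (forall j, \sum_i m i j = 1) ->
  (forall i, \sum_j m' i j = 1) -> (forall j, \sum_i m' i j = 1) ->
  (forall i, lam i <= \sum_j m i j * a j) ->
  (forall i, - lam i <= \sum_j m' i j * b j) ->
  \sum_i powR `|lam i| r <= \sum_j powR (a j) r + \sum_j powR (b j) r.
Proof.
move=> r1 a0 b0 m0 m'0 mr mc m'r m'c hl hl'.
have r0 : 0 <= r by apply: le_trans r1.
have u0 : forall i, 0 <= \sum_j m i j * a j.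
  by move=> i; apply: sumr_ge0 => j _; rewrite mulr_ge0.
have v0 : forall i, 0 <= \sum_j m' i j * b j.
  by move=> i; apply: sumr_ge0 => j _; rewrite mulr_ge0.
have key : forall i, powR `|lam i| r <=
   powR (\sum_j m i j * a j) r + powR (\sum_j m' i j * b j) r.
  move=> i; have [l0|l0] := leP 0 (lam i).
    have h : powR `|lam i| r <= powR (\sum_j m i j * a j) r.
      by apply: ge0_ler_powR; rewrite ?nnegrE ?normr_ge0 ?u0 // ger0_norm.
    apply: le_trans h _; by rewrite lerDl powR_ge0.
  have h : powR `|lam i| r <= powR (\sum_j m' i j * b j) r.
    by apply: ge0_ler_powR; rewrite ?nnegrE ?normr_ge0 ?v0 // ltr0_norm.
  apply: le_trans h _; by rewrite lerDr powR_ge0.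
apply: le_trans; first exact: (ler_sum _ (fun i _ => key i)).
rewrite big_split /=.
have J : forall (mm : 'I_n -> 'I_n -> R) (c : 'I_n -> R),
   (forall j, 0 <= c j) -> (forall i j, 0 <= mm i j) ->
   (forall i, \sum_j mm i j = 1) -> (forall j, \sum_i mm i j = 1) ->
   \sum_i powR (\sum_j mm i j * c j) r <= \sum_j powR (c j) r.
  move=> mm c c0 mm0 mmr mmc.
  apply: le_trans; first exact: (ler_sum _ (fun i _ => @jensen r n (mm i) c r1 (mm0 i) c0 (mmr i))).
  rewrite exchange_big /=; apply: ler_sum => j _.
  by rewrite -mulr_suml mmc mul1r.
by apply: lerD; apply: J.
Qed.

Lemma max_bound n (lam a b : 'I_n -> R) (m m' : 'I_n -> 'I_n -> R) :
  (forall j, 0 <= a j) -> (forall j, 0 <= b j) ->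
  (forall i j, 0 <= m i j) -> (forall i j, 0 <= m' i j) ->
  (forall i, \sum_j m i j = 1) -> (forall i, \sum_j m' i j = 1) ->
  (forall i, lam i <= \sum_j m i j * a j) ->
  (forall i, - lam i <= \sum_j m' i j * b j) ->
  \big[Num.max/0]_i `|lam i| <=
    Num.max (\big[Num.max/0]_j a j) (\big[Num.max/0]_j b j).
Proof.
move=> a0 b0 m0 m'0 mr m'r hl hl'.
have bm0 : forall c : 'I_n -> R, (forall j, 0 <= c j) -> 0 <= \big[Num.max/0]_j c j.
  move=> c c0; elim/big_ind: _ => //= x y hx hy.
  by rewrite le_max hx.
have sb : forall (mm : 'I_n -> 'I_n -> R) (c : 'I_n -> R) i,
   (forall i j, 0 <= mm i j) -> (forall i, \sum_j mm i j = 1) ->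
   \sum_j mm i j * c j <= \big[Num.max/0]_j c j.
  move=> mm c i mm0 mmr.
  rewrite -[X in _ <= X]mul1r -(mmr i) mulr_suml.
  apply: ler_sum => j _; rewrite ler_wpM2l //.
  exact: (le_bigmax 0 c j).
apply: bigmax_le; first by rewrite le_max bm0.
move=> i _; have [l0|l0] := leP 0 (lam i).
  rewrite ger0_norm // le_max; apply/orP; left.
  by apply: le_trans (hl i) (sb _ _ _ m0 mr).
rewrite ltr0_norm // le_max; apply/orP; right.
by apply: le_trans (hl' i) (sb _ _ _ m'0 m'r).
Qed.
End Real.

Section Mat.
Variable R : realType.
Local Notation C := R[i].
Local Open Scope complex_scope.

Definition qf {n} (v : 'rV[C]_n) (A : 'M[C]_n) : C := (v *m A *m adjmx v) 0 0.

Lemma qfB n (v : 'rV[C]_n) A B : qf v (A - B) = qf v A - qf v B.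
Proof. by rewrite /qf mulmxBr mulmxBl !mxE. Qed.

Lemma qfZ n (v : 'rV[C]_n) (c : C) A : qf v (c *: A) = c * qf v A.
Proof. by rewrite /qf -scalemxAr -scalemxAl mxE. Qed.

Lemma adjmx_mul m n p (A : 'M[C]_(m, n)) (B : 'M[C]_(n, p)) :
  adjmx (A *m B) = adjmx B *m adjmx A.
Proof. by rewrite /adjmx map_mxM trmx_mul. Qed.

Lemma adjmxK m n (A : 'M[C]_(m, n)) : adjmx (adjmx A) = A.
Proof.
rewrite /adjmx map_trmx trmxK -map_mx_comp; apply/matrixP => i j.
by rewrite !mxE /= conjCK.
Qed.

Lemma adjmxE m n (A : 'M[C]_(m, n)) : (A ^t* )%sesqui = adjmx A.
Proof. by rewrite /adjmx map_trmx. Qed.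

Lemma unitary_adjR n (P : 'M[C]_n) : P \is unitarymx -> P *m adjmx P = 1%:M.
Proof. by move=> /unitarymxP; rewrite adjmxE. Qed.

Lemma unitary_adjL n (P : 'M[C]_n) : P \is unitarymx -> adjmx P *m P = 1%:M.
Proof.
rewrite -trmxC_unitary => /unitarymxP; rewrite trmxCK.
by rewrite adjmxE.
Qed.

Lemma unitary_adj n (P : 'M[C]_n) : P \is unitarymx -> adjmx P \is unitarymx.
Proof. by rewrite -adjmxE trmxC_unitary. Qed.

Definition sq (z : C) : R := complex.Re z ^+ 2 + complex.Im z ^+ 2.

Lemma mulconj (z : C) : z * Num.conj z = (sq z)%:C.
Proof.
case: z => a b; rewrite /sq /=; apply/eqP; rewrite eq_complex /=.
apply/andP; split; apply/eqP; ring.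
Qed.

Lemma sq_ge0 z : 0 <= sq z.
Proof. by rewrite /sq addr_ge0 // sqr_ge0. Qed.

Lemma qf_diag n (v : 'rV[C]_n) (Q : 'M[C]_n) d :
  qf v (adjmx Q *m diag_mx d *m Q) =
  \sum_j d 0 j * (sq ((v *m adjmx Q) 0 j))%:C.
Proof.
rewrite /qf !mulmxA -[v *m adjmx Q *m diag_mx d *m Q *m adjmx v]mulmxA.
have -> : Q *m adjmx v = adjmx (v *m adjmx Q) by rewrite adjmx_mul adjmxK.
rewrite mxE; apply: eq_bigr => j _.
rewrite mul_mx_diag -mulconj /adjmx !mxE.
by rewrite mulrAC mulrC mulrA.
Qed.

Lemma herm_decomp n (A : 'M[C]_n) : A \is hermsymmx ->
  A = adjmx (spectralmx A) *m diag_mx (spectral_diag A) *m spectralmx A.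
Proof.
move=> /hermitian_normalmx /orthomx_spectralP {1}->.
by rewrite invmx_unitary ?spectral_unitarymx // adjmxE.
Qed.

Lemma real_C (z : C) : z \is Num.real -> z = (complex.Re z)%:C.
Proof.
case: z => a b; rewrite realE !lecE /= => /orP [] /andP [/eqP h _].
  by rewrite h.
by rewrite -h.
Qed.

Definition ev {n} (A : 'M[C]_n) j : R := complex.Re (spectral_diag A 0 j).

Lemma ev_spec n (A : 'M[C]_n) j : A \is hermsymmx ->
  spectral_diag A 0 j = (ev A j)%:C.
Proof.
move=> /hermitian_spectral_diag_real /mxOverP /(_ 0 j) h.
exact: real_C.
Qed.

Definition qr {n} (v : 'rV[C]_n) (A : 'M[C]_n) : R :=
  \sum_j ev A j * sq ((v *m adjmx (spectralmx A)) 0 j).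

Lemma qfR n (v : 'rV[C]_n) (A : 'M[C]_n) : A \is hermsymmx ->
  qf v A = (qr v A)%:C.
Proof.
move=> hA; rewrite {1}(herm_decomp hA) qf_diag /qr rmorph_sum /=.
by apply: eq_bigr => j _; rewrite rmorphM /= ev_spec.
Qed.

Lemma qr_eig n (A : 'M[C]_n) i : qr (row i (spectralmx A)) A = ev A i.
Proof.
rewrite /qr -row_mul unitary_adjR ?spectral_unitarymx //.
rewrite (bigD1 i) //= big1 ?addr0.
  by rewrite !mxE eqxx /sq /= expr0n /= addr0 expr1n mulr1.
move=> j /negPf ji; rewrite !mxE eq_sym ji /sq /=.
by rewrite expr0n /= addr0 mulr0.
Qed.

Lemma unitary_rows n (V : 'M[C]_n) i : V \is unitarymx ->
  \sum_j sq (V i j) = 1.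
Proof.
move=> /unitary_adjR /matrixP /(_ i i); rewrite !mxE eqxx /=.
under eq_bigr do rewrite /adjmx !mxE mulconj.
rewrite -rmorph_sum => h; apply: complexI; by rewrite h.
Qed.

Lemma unitary_cols n (V : 'M[C]_n) j : V \is unitarymx ->
  \sum_i sq (V i j) = 1.
Proof.
move=> /unitary_adjL /matrixP /(_ j j); rewrite !mxE eqxx /=.
under eq_bigr do rewrite /adjmx !mxE mulrC mulconj.
rewrite -rmorph_sum => h; apply: complexI; by rewrite h.
Qed.

Lemma cabs_real (x : R) : cabs (x%:C) = `|x|.
Proof. by rewrite /cabs normc_def /= expr0n /= addr0 sqrtr_sqr. Qed.
End Mat.

Section HermB.
Local Open Scope sesquilinear_scope.
Lemma hermB (R : realType) n (X Y : 'M[R[i]]_n) : X \is hermsymmx -> Y \is hermsymmx -> X - Y \is hermsymmx.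
Proof.
move=> hX hY.
have eX : X ^t Num.conj = X by move/is_hermitianmxP: hX; rewrite expr0 scale1r.
have eY : Y ^t Num.conj = Y by move/is_hermitianmxP: hY; rewrite expr0 scale1r.
apply/is_hermitianmxP; rewrite expr0 scale1r.
by rewrite linearB /= map_mxB eX eY.
Qed.
End HermB.

Section Core.
Variable R : realType.
Local Notation C := R[i].

Lemma ab_lemma (a x y : R) : 1 <= a -> 0 <= a * y - x -> x - y <= (1 - a^-1) * x.
Proof.
move=> a1 h; have a0 : a != 0 by rewrite gt_eqF // (lt_le_trans _ a1).
have -> : (1 - a^-1) * x = (x - y) + (a * y - x) / a by field.
rewrite lerDl divr_ge0 // (le_trans _ a1) //.
Qed.

Lemma nonneg_lemma (a x y : R) : 1 <= a -> 0 <= a * y - x -> 0 <= a * x - y ->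
  0 <= (1 - a^-1) * x.
Proof.
move=> a1 h1 h2; have a0 : 0 < a by rewrite (lt_le_trans _ a1).
have an0 : a != 0 by rewrite gt_eqF.
have -> : (1 - a^-1) * x = ((a - 1) * x) / a by field.
apply: divr_ge0; last exact: ltW.
have h3 : 0 <= ((a - 1) * x) * (a + 1) by nra.
have h4 : 0 < a + 1 by rewrite addr_gt0.
by rewrite -(pmulr_lge0 _ h4).
Qed.

Lemma qf_row n (P A : 'M[C]_n) i :
  qr (row i P) A = \sum_j sq ((P *m adjmx (spectralmx A)) i j) * ev A j.
Proof.
by rewrite /qr -row_mul; apply: eq_bigr => j _; rewrite mxE mulrC.
Qed.

Lemma psd_qr n (A B : 'M[C]_n) (a : R) v : A \is hermsymmx -> B \is hermsymmx ->
  loewner A ((a%:C)%C *: B) -> 0 <= a * qr v B - qr v A.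
Proof.
move=> hA hB /(_ v); rewrite -/(qf v _) qfB qfZ !qfR //.
by rewrite -rmorphM -rmorphB /= ler0c.
Qed.

Lemma lam_eq n (X Y : 'M[C]_n) i : X \is hermsymmx -> Y \is hermsymmx ->
  ev (X - Y) i = qr (row i (spectralmx (X - Y))) X - qr (row i (spectralmx (X - Y))) Y.
Proof.
move=> hX hY; apply: complexI; rewrite rmorphB /= -!qfR // -qfB qfR ?hermB //.
by rewrite qr_eig.
Qed.

Definition mW n (A B : 'M[C]_n) i j := sq ((spectralmx A *m adjmx (spectralmx B)) i j).

Lemma mW_ge0 n (A B : 'M[C]_n) i j : 0 <= mW A B i j.
Proof. exact: sq_ge0. Qed.

Lemma mW_unitary n (A B : 'M[C]_n) :
  spectralmx A *m adjmx (spectralmx B) \is unitarymx.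
Proof. by rewrite mul_unitarymx ?unitary_adj ?spectral_unitarymx. Qed.

Lemma mW_rows n (A B : 'M[C]_n) i : \sum_j mW A B i j = 1.
Proof. exact: unitary_rows (mW_unitary A B). Qed.

Lemma mW_cols n (A B : 'M[C]_n) j : \sum_i mW A B i j = 1.
Proof. exact: unitary_cols (mW_unitary A B). Qed.

Lemma a_nonneg n (X Y : 'M[C]_n) (a : R) j : X \is hermsymmx -> Y \is hermsymmx ->
  1 <= a -> loewner X ((a%:C)%C *: Y) -> loewner Y ((a%:C)%C *: X) ->
  0 <= (1 - a^-1) * ev X j.
Proof.
move=> hX hY a1 h1 h2.
have := psd_qr (row j (spectralmx X)) hX hY h1.
have := psd_qr (row j (spectralmx X)) hY hX h2.
rewrite qr_eig => e1 e2.
exact: nonneg_lemma a1 e2 e1.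
Qed.

Lemma upper n (X Y : 'M[C]_n) (a : R) i : X \is hermsymmx -> Y \is hermsymmx ->
  1 <= a -> loewner X ((a%:C)%C *: Y) -> loewner Y ((a%:C)%C *: X) ->
  ev (X - Y) i <= \sum_j mW (X - Y) X i j * ((1 - a^-1) * ev X j).
Proof.
move=> hX hY a1 h1 h2.
rewrite lam_eq //.
set v := row i _.
have := psd_qr v hX hY h1 => e1.
apply: le_trans (ab_lemma a1 e1) _.
rewrite qf_row mulr_sumr le_eqVlt; apply/orP; left; apply/eqP; apply: eq_bigr => j _.
by rewrite /mW mulrCA.
Qed.

Lemma lower n (X Y : 'M[C]_n) (a : R) i : X \is hermsymmx -> Y \is hermsymmx ->
  1 <= a -> loewner X ((a%:C)%C *: Y) -> loewner Y ((a%:C)%C *: X) ->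
  - ev (X - Y) i <= \sum_j mW (X - Y) Y i j * ((1 - a^-1) * ev Y j).
Proof.
move=> hX hY a1 h1 h2.
rewrite lam_eq // opprB.
set v := row i _.
have := psd_qr v hY hX h2 => e1.
apply: le_trans (ab_lemma a1 e1) _.
rewrite qf_row mulr_sumr le_eqVlt; apply/orP; left; apply/eqP; apply: eq_bigr => j _.
by rewrite /mW mulrCA.
Qed.
End Core.

Section Final.
Variable R : realType.
Local Notation C := R[i].

Lemma cabs_ev n (A : 'M[C]_n) j : A \is hermsymmx ->
  cabs (eigvals A 0 j) = `|ev A j|.
Proof. by move=> hA; rewrite /eigvals ev_spec // cabs_real. Qed.

Lemma powR_invK (x r : R) : 0 <= x -> 0 < r -> powR (powR x r^-1) r = x.
Proof. by move=> x0 r0; rewrite -powRrM mulVf ?gt_eqF // powRr1. Qed.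

Lemma powR_K2 (x r : R) : 0 <= x -> 0 < r -> powR (powR x r) r^-1 = x.
Proof. by move=> x0 r0; rewrite -powRrM mulfV ?gt_eqF // powRr1. Qed.

Lemma cabs_ge0 (z : C) : 0 <= cabs z.
Proof. by rewrite /cabs normc_def /= sqrtr_ge0. Qed.

Lemma schatten_ge0 (p : \bar R) n (A : 'M[C]_n) : (1%:E <= p)%E -> 0 <= schatten p A.
Proof.
case: p => [r| |] //= _; first exact: powR_ge0.
elim/big_ind: _ => //= [x y hx hy|i _]; [by rewrite le_max hx|exact: cabs_ge0].
Qed.

Lemma bound_alpha n (X Y : 'M[C]_n) (p : \bar R) (a : R) :
  X \is hermsymmx -> Y \is hermsymmx -> (1%:E <= p)%E ->
  1 <= a -> loewner X ((a%:C)%C *: Y) -> loewner Y ((a%:C)%C *: X) ->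
  schatten p (X - Y) <=
    two_pow_inv p * (1 - a^-1) * Num.max (schatten p X) (schatten p Y).
Proof.
move=> hX hY hp a1 h1 h2.
have hH := hermB hX hY.
set b := 1 - a^-1.
have b0 : 0 <= b by rewrite /b subr_ge0 invf_le1 // (lt_le_trans _ a1).
have aX := fun j => a_nonneg j hX hY a1 h1 h2.
have aY := fun j => a_nonneg j hY hX a1 h2 h1.
have up := fun i => upper i hX hY a1 h1 h2.
have lo := fun i => lower i hX hY a1 h1 h2.
case: p hp => [r| |] //= hp.
  rewrite lee_fin in hp.
  have r0 : 0 < r by apply: lt_le_trans hp.
  have ri0 : 0 <= r^-1 by rewrite invr_ge0 ltW.
  have eS : forall Z : 'M[C]_n, Z \is hermsymmx ->
     \sum_i powR (cabs (eigvals Z 0 i)) r = \sum_i powR `|ev Z i| r.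
    by move=> Z hZ; apply: eq_bigr => i _; rewrite cabs_ev.
  rewrite !eS //.
  set SX := \sum_j powR `|ev X j| r.
  set SY := \sum_j powR `|ev Y j| r.
  have SX0 : 0 <= SX by apply: sumr_ge0 => j _; exact: powR_ge0.
  have SY0 : 0 <= SY by apply: sumr_ge0 => j _; exact: powR_ge0.
  have key := sum_pow_bound (lam := ev (X - Y)) hp aX aY (@mW_ge0 _ _ _ _)
     (@mW_ge0 _ _ _ _) (@mW_rows _ _ _ _) (@mW_cols _ _ _ _)
     (@mW_rows _ _ _ _) (@mW_cols _ _ _ _) up lo.
  have pw : forall (Z : 'M[C]_n) j, 0 <= b * ev Z j ->
      powR (b * ev Z j) r = powR b r * powR `|ev Z j| r.
    move=> Z j h.
    have -> : b * ev Z j = b * `|ev Z j| by rewrite -[LHS](ger0_norm h) normrM (ger0_norm b0).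
    by rewrite powRM ?normr_ge0.
  have eX : \sum_j powR (b * ev X j) r = powR b r * SX.
    by rewrite /SX mulr_sumr; apply: eq_bigr => j _; exact: pw.
  have eY : \sum_j powR (b * ev Y j) r = powR b r * SY.
    by rewrite /SY mulr_sumr; apply: eq_bigr => j _; exact: pw.
  rewrite -/b eX eY -mulrDr in key.
  set M := Num.max (powR SX r^-1) (powR SY r^-1).
  have M0 : 0 <= M by apply: le_trans (powR_ge0 SX r^-1) _; rewrite /M le_max; apply/orP; left.
  have SXM : SX <= powR M r.
    have h := @ge0_ler_powR R r (ltW r0) (powR SX r^-1) M.
    rewrite powR_invK // in h; apply: h; rewrite ?nnegrE ?powR_ge0 //.
    by rewrite /M le_max; apply/orP; left.
  have SYM : SY <= powR M r.
    have h := @ge0_ler_powR R r (ltW r0) (powR SY r^-1) M.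
    rewrite powR_invK // in h; apply: h; rewrite ?nnegrE ?powR_ge0 //.
    by rewrite /M le_max; apply/orP; right.
  have key2 : \sum_i powR `|ev (X - Y) i| r <= powR b r * (2 * powR M r).
    apply: le_trans key _; apply: ler_wpM2l; first exact: powR_ge0.
    by rewrite mulr_natl mulr2n; apply: lerD.
  have LH0 : 0 <= \sum_i powR `|ev (X - Y) i| r.
    by apply: sumr_ge0 => i _; exact: powR_ge0.
  have R0 : 0 <= powR b r * (2 * powR M r).
    by apply: mulr_ge0; [exact: powR_ge0| apply: mulr_ge0; [by []| exact: powR_ge0]].
  apply: le_trans (ge0_ler_powR ri0 _ _ key2) _; rewrite ?nnegrE //.
  rewrite powRM; [|exact: powR_ge0|by apply: mulr_ge0; [by []| exact: powR_ge0]].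
  rewrite powRM; [|by []|exact: powR_ge0].
  rewrite !powR_K2 //.
  by rewrite le_eqVlt; apply/orP; left; apply/eqP; ring.
have eM : forall Z : 'M[C]_n, Z \is hermsymmx ->
   \big[Num.max/0]_i cabs (eigvals Z 0 i) = \big[Num.max/0]_i `|ev Z i|.
  by move=> Z hZ; apply: eq_bigr => i _; rewrite cabs_ev.
rewrite !eM //.
apply: le_trans.
  exact: (max_bound aX aY (@mW_ge0 _ _ _ _) (@mW_ge0 _ _ _ _)
     (@mW_rows _ _ _ _) (@mW_rows _ _ _ _) up lo).
have bm0 : forall Z : 'M[C]_n, 0 <= \big[Num.max/0]_j `|ev Z j|.
  move=> Z; elim/big_ind: _ => //= x y hx hy; by rewrite le_max hx.
have bmZ : forall Z : 'M[C]_n, (forall j, 0 <= b * ev Z j) ->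
    \big[Num.max/0]_j (b * ev Z j) <= b * \big[Num.max/0]_j `|ev Z j|.
  move=> Z hZ; apply: bigmax_le; first exact: mulr_ge0.
  move=> j _; apply: ler_wpM2l => //.
  apply: le_trans (le_bigmax 0 (fun j => `|ev Z j|) j).
  exact: ler_norm.
rewrite mul1r ge_max; apply/andP; split.
  apply: le_trans (bmZ X aX) _; apply: ler_wpM2l => //.
  by rewrite le_max; apply/orP; left.
apply: le_trans (bmZ Y aY) _; apply: ler_wpM2l => //.
by rewrite le_max; apply/orP; right.
Qed.
End Final.

Unset Implicit Arguments.

Theorem theorem3 (R : realType) (n : nat) (X Y : 'M[R[i]]_n) (p : \bar R) :
  X \is hermsymmx -> Y \is hermsymmx ->
  (thompson X Y < +oo)%E ->
  (1%:E <= p)%E ->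
  let d := fine (thompson X Y) in
  schatten p (X - Y) <=
    two_pow_inv p * ((expR d - 1) / expR d) *
      Num.max (schatten p X) (schatten p Y).
Proof.
move=> hX hY hT hp; rewrite /=; set d := fine (thompson X Y).
have S0 : forall y, [set (ln a)%:E | a in thompson_set X Y]%classic y -> (0%:E <= y)%E.
  by move=> y [a [a1 _] <-]; rewrite lee_fin ln_ge0.
have T0 : (0%:E <= thompson X Y)%E by apply/ereal_infP.
have Tfin : thompson X Y \is a fin_num by rewrite ge0_fin_numE.
have dE : thompson X Y = d%:E by rewrite /d fineK.
have d0 : 0 <= d by rewrite -lee_fin -dE.
have c0 : 0 <= two_pow_inv p by case: (p) => [r| |] //=; exact: powR_ge0.
have M0 : 0 <= Num.max (schatten p X) (schatten p Y).
  by apply: le_trans (schatten_ge0 X hp) _; rewrite le_max; apply/orP; left.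
move: c0 M0; set c := two_pow_inv p; set M := Num.max _ _ => c0 M0.
have ed0 : expR d != 0 by rewrite gt_eqF // expR_gt0.
have eK : (expR d - 1) / expR d = 1 - expR (- d) by rewrite expRN; field.
rewrite eK.
apply/ler_addgt0Pr => e e0.
have cM1 : 0 < c * M + 1 by rewrite ltr_pwDr // mulr_ge0.
set del := e / (c * M + 1).
have del0 : 0 < del by rewrite divr_gt0.
have := lb_ereal_inf_adherent del0 Tfin.
move=> [y [a [a1 [h1 h2]] <-]] ylt.
rewrite -/(thompson X Y) dE -EFinD lte_fin in ylt.
have hb := bound_alpha hX hY hp a1 h1 h2.
have a0 : 0 < a by rewrite (lt_le_trans _ a1).
have ia : a^-1 = expR (- ln a) by rewrite expRN lnK // posrE.
have E1 : expR (- (d + del)) <= a^-1.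
  by rewrite ia ler_expR lerN2 ltW.
have E2 : expR (- d) * (1 - del) <= expR (- (d + del)).
  rewrite opprD expRD; apply: ler_wpM2l; first exact: expR_ge0.
  by have := expR_ge1Dx (- del); rewrite addrC.
have E3 : expR (- d) <= 1 by rewrite -expR0 ler_expR lerNl oppr0.
have E4 : 0 <= expR (- d) by exact: expR_ge0.
have bb : 1 - a^-1 <= 1 - expR (- d) + del by nra.
apply: le_trans hb _.
have h5 : c * (1 - a^-1) * M <= c * (1 - expR (- d) + del) * M.
  by apply: ler_wpM2r => //; apply: ler_wpM2l.
apply: le_trans h5 _.
have h6 : c * del * M <= e.
  have cM0 : c * M + 1 != 0 by rewrite gt_eqF.
  have -> : c * del * M = e * ((c * M) / (c * M + 1)) by rewrite /del; field.
  rewrite -[X in _ <= X]mulr1; apply: ler_wpM2l; first exact: ltW.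
  by rewrite ler_pdivrMr // mul1r lerDl.
have -> : c * (1 - expR (- d) + del) * M = c * (1 - expR (- d)) * M + c * del * M by ring.
by rewrite lerD2l.
Qed.
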